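(* Let $r>0$, $a<b$, $f\in L^\infty_{\rm loc}(\mathbb{R})$, $\alpha,\beta\in L^\infty_{\rm loc}(\mathbb{R})$. The problem $$D_ru=f\ \text{in }(a,b),\qquad u=\alpha\ \text{in }[a-r,a],\qquad u=\beta\ \text{in }[b,b+r]$$ has a unique solution $u$ on $[a-r,b+r]$ (up to null sets), given by $u=\alpha$ on $[a-r,a]$, $u=\beta$ on $[b,b+r]$, and for $x\in(a,b)$ $$u(x)=\frac{\overline k(x)}{\overline k(x)+\underline k(x)}\Big(\alpha(x-\underline k(x)r)-r^2\sum_{j=1}^{\underline k(x)-1}j\,f\big(x-(\underline k(x)-j)r\big)\Big)+\frac{\underline k(x)}{\overline k(x)+\underline k(x)}\Big(\beta(x+\overline k(x)r)-r^2\sum_{j=1}^{\overline k(x)-1}j\,f\big(x+(\overline k(x)-j)r\big)\Big)-r^2\frac{\underline k(x)\overline k(x)}{\overline k(x)+\underline k(x)}f(x),$$ where $\overline k(x):=\lceil (b-x)/r\rceil$ and $\underline k(x):=\lceil (x-a)/r\rceil$.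
   Context: $D_ru(x):=\dfrac{u(x+r)+u(x-r)-2u(x)}{r^2}$. The equation $D_ru=f$ in $(a,b)$ is required for a.e. $x\in(a,b)$. $\lceil t\rceil$ denotes the smallest integer $\ge t$. *)

(* Defs.v *)
From Stdlib Require Import Reals Lra Lia ZArith.
Open Scope R_scope.

(* [outer_le E m] : the Lebesgue outer measure of E is <= m, i.e. for every
   eps > 0, E is covered by countably many open intervals (c n, d n) whose
   total length is <= m + eps. *)
Definition outer_le (E : R -> Prop) (m : R) : Prop :=
  forall eps : R, 0 < eps ->
    exists c d : nat -> R,
      (forall n, c n <= d n) /\
      (forall x, E x -> exists n, c n < x < d n) /\
      (forall n, sum_f_R0 (fun k => d k - c k) n <= m + eps).

Definition null_set (N : R -> Prop) : Prop := outer_le N 0.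

Definition ae_on (S : R -> Prop) (P : R -> Prop) : Prop :=
  exists N : R -> Prop, null_set N /\ forall x, S x -> ~ N x -> P x.

(* Caratheodory (Lebesgue) measurability of a set E:
   m*(A /\ E) + m*(A \ E) <= m*(A) for every A. *)
Definition measurable_set (E : R -> Prop) : Prop :=
  forall (A : R -> Prop) (m : R), outer_le A m ->
    exists y z : R, y + z <= m /\
      outer_le (fun x => A x /\ E x) y /\ outer_le (fun x => A x /\ ~ E x) z.

Definition measurable_fun (g : R -> R) : Prop :=
  forall c : R, measurable_set (fun x => c < g x).

Definition Linf_loc (g : R -> R) : Prop :=
  measurable_fun g /\
  forall p q : R, exists M : R, ae_on (fun x => p <= x <= q) (fun x => Rabs (g x) <= M).

Definition Dr (r : R) (u : R -> R) (x : R) : R :=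
  (u (x + r) + u (x - r) - 2 * u x) / r ^ 2.

(* ceiling: smallest integer >= t  (Stdlib's [up t] is the smallest integer > t) *)
Definition Rceil (t : R) : Z := (1 - up (- t))%Z.

Fixpoint sum_1 (n : nat) (g : nat -> R) : R :=
  match n with
  | O => 0
  | S m => sum_1 m g + g (S m)
  end.

Definition kbar (b r x : R) : Z := Rceil ((b - x) / r).
Definition kund (a r x : R) : Z := Rceil ((x - a) / r).

Definition sol (r a b : R) (f al be : R -> R) (x : R) : R :=
  if Rle_dec x a then al x
  else if Rle_dec b x then be x
  else
    let K := IZR (kbar b r x) in
    let L := IZR (kund a r x) in
    let nK := Z.to_nat (kbar b r x) in
    let nL := Z.to_nat (kund a r x) in
    K / (K + L) *
      (al (x - L * r) - r ^ 2 * sum_1 (nL - 1) (fun j => INR j * f (x - (L - INR j) * r)))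
    + L / (K + L) *
      (be (x + K * r) - r ^ 2 * sum_1 (nK - 1) (fun j => INR j * f (x + (K - INR j) * r)))
    - r ^ 2 * (L * K / (K + L)) * f x.

(* Main.v *)
Require Import Defs.
From Stdlib Require Import Reals Lra Lia ZArith Arith.
Open Scope R_scope.

Lemma null_mono (A B : R -> Prop) : null_set A -> (forall x, B x -> A x) -> null_set B.
Proof.
  intros HA HB eps He. destruct (HA eps He) as (c & d & H1 & H2 & H3).
  exists c, d. split; [exact H1|split; [|exact H3]].
  intros x Hx. apply H2, HB, Hx.
Qed.

Lemma null_empty : null_set (fun _ => False).
Proof.
  intros eps He. exists (fun _ => 0), (fun _ => 0). split; [intros; lra|].
  split; [intros x []|]. intros n. induction n; simpl; lra.
Qed.

Lemma null_translate (N : R -> Prop) (t : R) : null_set N -> null_set (fun x => N (x + t)).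
Proof.
  intros HN eps He. destruct (HN eps He) as (c & d & H1 & H2 & H3).
  exists (fun n => c n - t), (fun n => d n - t). split; [intros n; specialize (H1 n); lra|].
  split.
  - intros x Hx. destruct (H2 _ Hx) as [n Hn]. exists n. lra.
  - intros n. rewrite (sum_eq _ (fun k => d k - c k)); [apply H3|]. intros; lra.
Qed.

Lemma sum_mono (g : nat -> R) : (forall n, 0 <= g n) ->
  forall n k, sum_f_R0 g n <= sum_f_R0 g (n + k).
Proof.
  intros Hg n k. induction k.
  - rewrite Nat.add_0_r; lra.
  - rewrite Nat.add_succ_r. simpl. specialize (Hg (S (n + k))). lra.
Qed.

Lemma null_union (A B : R -> Prop) : null_set A -> null_set B -> null_set (fun x => A x \/ B x).
Proof.
  intros HA HB eps He.
  destruct (HA (eps/2) ltac:(lra)) as (c1 & d1 & H11 & H12 & H13).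
  destruct (HB (eps/2) ltac:(lra)) as (c2 & d2 & H21 & H22 & H23).
  set (c := fun n => if Nat.even n then c1 (Nat.div2 n) else c2 (Nat.div2 n)).
  set (d := fun n => if Nat.even n then d1 (Nat.div2 n) else d2 (Nat.div2 n)).
  assert (Ec : forall m, c (2*m)%nat = c1 m /\ d (2*m)%nat = d1 m).
  { intros m; unfold c, d; rewrite Nat.even_even, Nat.div2_double; auto. }
  assert (Oc : forall m, c (S (2*m))%nat = c2 m /\ d (S (2*m))%nat = d2 m).
  { intros m; unfold c, d. replace (S (2*m)) with (2*m+1)%nat by lia.
    rewrite Nat.even_odd, Nat.div2_odd'; auto. }
  exists c, d. split.
  { intros n; unfold c, d; destruct (Nat.even n); auto. }
  split.
  { intros x [Hx|Hx].
    - destruct (H12 _ Hx) as [n Hn]. exists (2*n)%nat. destruct (Ec n) as [-> ->]; auto.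
    - destruct (H22 _ Hx) as [n Hn]. exists (S (2*n))%nat. destruct (Oc n) as [-> ->]; auto. }
  assert (Hs : forall m, sum_f_R0 (fun k => d k - c k) (S (2*m)) =
     sum_f_R0 (fun k => d1 k - c1 k) m + sum_f_R0 (fun k => d2 k - c2 k) m).
  { induction m.
    - simpl. destruct (Ec 0%nat) as [E1 E2]. destruct (Oc 0%nat) as [O1 O2].
      simpl in *. rewrite E1, E2, O1, O2. ring.
    - replace (S (2 * S m)) with (S (S (S (2*m)))) by lia.
      change (sum_f_R0 (fun k => d k - c k) (S (S (S (2*m))))) with
        (sum_f_R0 (fun k => d k - c k) (S (2*m)) + (d (S (S (2*m))) - c (S (S (2*m))))
          + (d (S (S (S (2*m)))) - c (S (S (S (2*m)))))).
      rewrite IHm. replace (S (S (2*m))) with (2 * S m)%nat by lia.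
      destruct (Ec (S m)) as [-> ->]. destruct (Oc (S m)) as [-> ->]. simpl. ring. }
  intros n. apply Rle_trans with (sum_f_R0 (fun k => d k - c k) (S (2*n))).
  - replace (S (2*n)) with (n + S n)%nat by lia. apply sum_mono.
    intros k; unfold c, d; destruct (Nat.even k); [specialize (H11 (Nat.div2 k))|specialize (H21 (Nat.div2 k))]; lra.
  - rewrite Hs. specialize (H13 n). specialize (H23 n). lra.
Qed.

Lemma null_finite_union (N : nat -> R -> Prop) : (forall j, null_set (N j)) ->
  forall m, null_set (fun x => exists j, (j <= m)%nat /\ N j x).
Proof.
  intros HN m. induction m.
  - apply null_mono with (N 0%nat); [apply HN|]. intros x [j [Hj Hx]].
    replace j with 0%nat in Hx by lia. exact Hx.
  - apply null_mono with (fun x => (exists j, (j <= m)%nat /\ N j x) \/ N (S m) x).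
    + apply null_union; auto.
    + intros x [j [Hj Hx]]. destruct (Nat.eq_dec j (S m)) as [->|Hne]; [right; auto|].
      left; exists j; split; [lia|auto].
Qed.

Lemma discrete_unique (w : nat -> R) (n : nat) : w 0%nat = 0 -> w n = 0 ->
  (forall i, (0 < i < n)%nat -> w (S i) + w (i - 1)%nat - 2 * w i = 0) ->
  forall i, (i <= n)%nat -> w i = 0.
Proof.
  intros H0 Hn Hrec.
  assert (Hlin : forall i, (S i <= n)%nat -> w i = INR i * w 1%nat /\ w (S i) = INR (S i) * w 1%nat).
  { induction i; intros Hi.
    - rewrite H0. simpl. split; ring.
    - destruct (IHi ltac:(lia)) as [E1 E2]. split; [exact E2|].
      assert (R1 := Hrec (S i) ltac:(lia)). replace (S i - 1)%nat with i in R1 by lia.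
      rewrite E1, E2 in R1. rewrite !S_INR in *. lra. }
  intros i Hi. destruct n as [|n'].
  - replace i with 0%nat by lia. exact H0.
  - assert (w 1%nat = 0).
    { destruct (Hlin n' ltac:(lia)) as [_ E]. rewrite E in Hn.
      assert (0 < INR (S n')) by (apply lt_0_INR; lia). nra. }
    destruct (Nat.eq_dec i (S n')) as [->|Hne]; [exact Hn|].
    destruct (Hlin i ltac:(lia)) as [E _]. rewrite E, H. ring.
Qed.
Lemma Rceil_spec t : IZR (Rceil t) - 1 < t <= IZR (Rceil t).
Proof. unfold Rceil; rewrite minus_IZR; destruct (archimed (-t)); lra. Qed.

Lemma Rceil_unique t z : IZR z - 1 < t <= IZR z -> Rceil t = z.
Proof.
  intros Hz. pose proof (Rceil_spec t) as Hc.
  assert (A1 : IZR (z - Rceil t) < 1) by (rewrite minus_IZR; lra).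
  assert (A2 : -1 < IZR (z - Rceil t)) by (rewrite minus_IZR; lra).
  apply lt_IZR in A1. change (-1) with (IZR (-1)) in A2. apply lt_IZR in A2. lia.
Qed.

Lemma Rceil_shift t z : Rceil (t + IZR z) = (Rceil t + z)%Z.
Proof. apply Rceil_unique. rewrite plus_IZR. pose proof (Rceil_spec t). lra. Qed.

Section S.
Variables (r a b : R) (f al be : R -> R).
Hypothesis (Hr : 0 < r) (Hab : a < b).

Lemma kund_plus y : kund a r (y + r) = (kund a r y + 1)%Z.
Proof. unfold kund. rewrite <- Rceil_shift. f_equal. simpl. field. lra. Qed.
Lemma kund_minus y : kund a r (y - r) = (kund a r y + -1)%Z.
Proof. unfold kund. rewrite <- Rceil_shift. f_equal. simpl. field. lra. Qed.
Lemma kbar_plus y : kbar b r (y + r) = (kbar b r y + -1)%Z.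
Proof. unfold kbar. rewrite <- Rceil_shift. f_equal. simpl. field. lra. Qed.
Lemma kbar_minus y : kbar b r (y - r) = (kbar b r y + 1)%Z.
Proof. unfold kbar. rewrite <- Rceil_shift. f_equal. simpl. field. lra. Qed.

Lemma kund_bounds y : IZR (kund a r y) - 1 < (y - a) / r <= IZR (kund a r y).
Proof. apply Rceil_spec. Qed.
Lemma kbar_bounds y : IZR (kbar b r y) - 1 < (b - y) / r <= IZR (kbar b r y).
Proof. apply Rceil_spec. Qed.

Lemma div_bounds (t u z : R) : t = u / r -> z - 1 < t <= z -> (z - 1) * r < u <= z * r.
Proof. intros -> H. replace u with (u / r * r) by (field; lra). split; nra. Qed.

Definition F (y : R) (l k : nat) : R :=
  INR k / (INR k + INR l) *
      (al (y - INR l * r) - r ^ 2 * sum_1 (l - 1) (fun j => INR j * f (y - (INR l - INR j) * r)))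
    + INR l / (INR k + INR l) *
      (be (y + INR k * r) - r ^ 2 * sum_1 (k - 1) (fun j => INR j * f (y + (INR k - INR j) * r)))
    - r ^ 2 * (INR l * INR k / (INR k + INR l)) * f y.

Lemma Z_nat_R (z : Z) : (0 <= z)%Z -> IZR z = INR (Z.to_nat z).
Proof. intros H. rewrite INR_IZR_INZ, Z2Nat.id; auto. Qed.

Lemma kund_pos y : a < y -> (1 <= kund a r y)%Z.
Proof.
  intros H. destruct (kund_bounds y) as [_ H2].
  assert (0 < (y - a) / r) by (apply Rdiv_lt_0_compat; lra).
  assert (0 < IZR (kund a r y)) by lra. apply lt_IZR in H1. lia.
Qed.
Lemma kbar_pos y : y < b -> (1 <= kbar b r y)%Z.
Proof.
  intros H. destruct (kbar_bounds y) as [_ H2].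
  assert (0 < (b - y) / r) by (apply Rdiv_lt_0_compat; lra).
  assert (0 < IZR (kbar b r y)) by lra. apply lt_IZR in H1. lia.
Qed.

Lemma sol_F y : a < y < b ->
  sol r a b f al be y = F y (Z.to_nat (kund a r y)) (Z.to_nat (kbar b r y)).
Proof.
  intros Hy. pose proof (kund_pos y ltac:(lra)). pose proof (kbar_pos y ltac:(lra)).
  unfold sol. destruct (Rle_dec y a); [lra|]. destruct (Rle_dec b y); [lra|].
  cbv zeta. rewrite (Z_nat_R (kund a r y)), (Z_nat_R (kbar b r y)) by lia.
  reflexivity.
Qed.

Lemma sum_1_ext n g1 g2 : (forall j, g1 j = g2 j) -> sum_1 n g1 = sum_1 n g2.
Proof. intros H; induction n; simpl; [reflexivity|]. rewrite IHn, H; reflexivity. Qed.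

Lemma sum_1_pred m (G : nat -> R) :
  sum_1 (m - 1) (fun j => INR j * G j) = sum_1 m (fun j => INR j * G j) - INR m * G m.
Proof. destruct m; simpl; [ring|]. rewrite Nat.sub_0_r. ring. Qed.

Lemma F_eq y l k p0 pn : y - INR l * r = p0 -> y + INR k * r = pn ->
  F y l k = INR k / (INR k + INR l) *
      (al p0 - r ^ 2 * sum_1 (l - 1) (fun j => INR j * f (p0 + INR j * r)))
    + INR l / (INR k + INR l) *
      (be pn - r ^ 2 * sum_1 (k - 1) (fun j => INR j * f (pn - INR j * r)))
    - r ^ 2 * (INR l * INR k / (INR k + INR l)) * f y.
Proof.
  intros H1 H2. unfold F. rewrite H1, H2.
  rewrite (sum_1_ext _ _ (fun j => INR j * f (p0 + INR j * r))).
  2:{ intros j. f_equal. f_equal. rewrite <- H1. ring. }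
  rewrite (sum_1_ext (k - 1) _ (fun j => INR j * f (pn - INR j * r))).
  2:{ intros j. f_equal. f_equal. rewrite <- H2. ring. }
  reflexivity.
Qed.

Lemma F_identity x l' k' :
  F (x + r) (S (S l')) k' + F (x - r) l' (S (S k')) - 2 * F x (S l') (S k') = r ^ 2 * f x.
Proof.
  set (p0 := x - INR (S l') * r). set (pn := x + INR (S k') * r).
  set (P := fun m => sum_1 m (fun j => INR j * f (p0 + INR j * r))).
  set (Q := fun m => sum_1 m (fun j => INR j * f (pn - INR j * r))).
  rewrite (F_eq (x + r) (S (S l')) k' p0 pn) by (unfold p0, pn; rewrite !S_INR; ring).
  rewrite (F_eq (x - r) l' (S (S k')) p0 pn) by (unfold p0, pn; rewrite !S_INR; ring).
  rewrite (F_eq x (S l') (S k') p0 pn) by (unfold p0, pn; rewrite !S_INR; ring).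
  replace (S (S l') - 1)%nat with (S l') by lia.
  replace (S (S k') - 1)%nat with (S k') by lia.
  replace (S l' - 1)%nat with l' by lia.
  replace (S k' - 1)%nat with k' by lia.
  rewrite !sum_1_pred.
  change (sum_1 (S l') ?g) with (sum_1 l' g + g (S l')).
  change (sum_1 (S k') ?g) with (sum_1 k' g + g (S k')).
  cbv beta.
  replace (p0 + INR (S l') * r) with x by (unfold p0; ring).
  replace (pn - INR (S k') * r) with x by (unfold pn; ring).
  replace (p0 + INR l' * r) with (x - r) by (unfold p0; rewrite S_INR; ring).
  replace (pn - INR k' * r) with (x + r) by (unfold pn; rewrite S_INR; ring).
  set (SP := sum_1 l' _). set (SQ := sum_1 k' _).
  set (A := al p0). set (B := be pn).
  pose proof (pos_INR l'). pose proof (pos_INR k').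
  rewrite !S_INR. field. lra.
Qed.


Lemma F_k0 y l : (1 <= l)%nat -> F y l 0 = be y.
Proof.
  intros Hl. unfold F. change (INR 0) with 0. simpl (sum_1 (0 - 1) _).
  replace (y + 0 * r) with y by ring.
  assert (0 < INR l) by (apply lt_0_INR; lia). field. lra.
Qed.

Lemma F_l0 y k : (1 <= k)%nat -> F y 0 k = al y.
Proof.
  intros Hk. unfold F. change (INR 0) with 0. simpl (sum_1 (0 - 1) _).
  replace (y - 0 * r) with y by ring.
  assert (0 < INR k) by (apply lt_0_INR; lia). field. lra.
Qed.

Lemma to_nat_S (z : Z) : (1 <= z)%Z -> exists m, Z.to_nat z = S m.
Proof. intros H. exists (Z.to_nat z - 1)%nat. lia. Qed.

Lemma sol_plus x l' k' : a < x < b -> Z.to_nat (kund a r x) = S l' ->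
  Z.to_nat (kbar b r x) = S k' -> sol r a b f al be (x + r) = F (x + r) (S (S l')) k'.
Proof.
  intros Hx Hl Hk. pose proof (kund_pos x ltac:(lra)). pose proof (kbar_pos x ltac:(lra)).
  destruct (kbar_bounds x) as [B1 B2].
  rewrite (Z_nat_R (kbar b r x) ltac:(lia)), Hk in B1, B2.
  pose proof (div_bounds _ _ _ eq_refl (conj B1 B2)) as [C1 C2].
  destruct k' as [|k''].
  - rewrite F_k0 by lia. unfold sol. destruct (Rle_dec (x + r) a); [lra|].
    destruct (Rle_dec b (x + r)) as [|n']; [reflexivity|]. exfalso.
    change (INR 1) with 1 in C2. lra.
  - rewrite sol_F.
    + rewrite kund_plus, kbar_plus. f_equal; lia.
    + rewrite !S_INR in C1. pose proof (pos_INR k''). split; [lra|nra].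
Qed.

Lemma sol_minus x l' k' : a < x < b -> Z.to_nat (kund a r x) = S l' ->
  Z.to_nat (kbar b r x) = S k' -> sol r a b f al be (x - r) = F (x - r) l' (S (S k')).
Proof.
  intros Hx Hl Hk. pose proof (kund_pos x ltac:(lra)). pose proof (kbar_pos x ltac:(lra)).
  destruct (kund_bounds x) as [B1 B2].
  rewrite (Z_nat_R (kund a r x) ltac:(lia)), Hl in B1, B2.
  pose proof (div_bounds _ _ _ eq_refl (conj B1 B2)) as [C1 C2].
  destruct l' as [|l''].
  - rewrite F_l0 by lia. unfold sol. destruct (Rle_dec (x - r) a) as [|n']; [reflexivity|].
    exfalso. change (INR 1) with 1 in C2. lra.
  - rewrite sol_F.
    + rewrite kund_minus, kbar_minus. f_equal; lia.
    + rewrite !S_INR in C1. pose proof (pos_INR l''). split; [nra|lra].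
Qed.

Lemma exist_pt x : a < x < b -> Dr r (sol r a b f al be) x = f x.
Proof.
  intros Hx. pose proof (kund_pos x ltac:(lra)). pose proof (kbar_pos x ltac:(lra)).
  destruct (to_nat_S _ H) as [l' Hl]. destruct (to_nat_S _ H0) as [k' Hk].
  unfold Dr. rewrite (sol_plus x l' k' Hx Hl Hk), (sol_minus x l' k' Hx Hl Hk).
  rewrite (sol_F x Hx), Hl, Hk. rewrite F_identity. field. lra.
Qed.


Lemma uniq_part (u : R -> R) :
     ae_on (fun x => a < x < b) (fun x => Dr r u x = f x) ->
     ae_on (fun x => a - r <= x <= a) (fun x => u x = al x) ->
     ae_on (fun x => b <= x <= b + r) (fun x => u x = be x) ->
     ae_on (fun x => a - r <= x <= b + r) (fun x => u x = sol r a b f al be x).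
Proof.
  intros [N1 [HN1 H1]] [N2 [HN2 H2]] [N3 [HN3 H3]].
  set (N := fun y => N1 y \/ (N2 y \/ N3 y)).
  assert (HN : null_set N) by (apply null_union; [|apply null_union]; auto).
  set (U := up ((b - a) / r)). set (M := Z.to_nat U).
  destruct (archimed ((b - a) / r)) as [U1 _]. fold U in U1.
  assert (Hba : 0 < (b - a) / r) by (apply Rdiv_lt_0_compat; lra).
  assert (HU : (1 <= U)%Z) by (assert (0 < IZR U) by lra; apply lt_IZR in H; lia).
  assert (HM : INR M = IZR U) by (unfold M; rewrite <- Z_nat_R; auto; lia).
  assert (HbaM : b - a < INR M * r).
  { rewrite HM. replace (b - a) with ((b - a) / r * r) by (field; lra). nra. }
  exists (fun x => exists j, (j <= 2 * M)%nat /\ N (x + (INR j - INR M) * r)).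
  split.
  { apply (null_finite_union (fun j x => N (x + (INR j - INR M) * r))).
    intros j. apply null_translate. exact HN. }
  intros x Hx HE.
  assert (Hj : forall j, (j <= 2 * M)%nat -> ~ N (x + (INR j - INR M) * r)).
  { intros j Hj HNj. apply HE. exists j. auto. }
  assert (H0 : ~ N x).
  { intros HNx. apply (Hj M ltac:(lia)). replace (x + (INR M - INR M) * r) with x by ring. exact HNx. }
  destruct (Rle_dec x a) as [Hxa|Hxa].
  { unfold sol. destruct (Rle_dec x a); [|lra]. apply H2; [lra|]. intro; apply H0; unfold N; auto. }
  destruct (Rle_dec b x) as [Hxb|Hxb].
  { unfold sol. destruct (Rle_dec x a); [lra|]. destruct (Rle_dec b x); [|lra].
    apply H3; [lra|]. intro; apply H0; unfold N; auto. }
  assert (Hx' : a < x < b) by lra.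
  pose proof (kund_pos x ltac:(lra)) as Kl. pose proof (kbar_pos x ltac:(lra)) as Kk.
  set (l := Z.to_nat (kund a r x)). set (k := Z.to_nat (kbar b r x)).
  destruct (kund_bounds x) as [B1 B2]. rewrite (Z_nat_R (kund a r x)) in B1, B2 by lia.
  fold l in B1, B2. pose proof (div_bounds _ _ _ eq_refl (conj B1 B2)) as [L1 L2].
  destruct (kbar_bounds x) as [B3 B4]. rewrite (Z_nat_R (kbar b r x)) in B3, B4 by lia.
  fold k in B3, B4. pose proof (div_bounds _ _ _ eq_refl (conj B3 B4)) as [K1 K2].
  assert (l1 : (1 <= l)%nat) by (unfold l; lia).
  assert (k1 : (1 <= k)%nat) by (unfold k; lia).
  assert (lM : (l <= M)%nat).
  { assert (INR l < INR (M + 1)) by (rewrite plus_INR; simpl; nra). apply INR_lt in H. lia. }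
  assert (kM : (k <= M)%nat).
  { assert (INR k < INR (M + 1)) by (rewrite plus_INR; simpl; nra). apply INR_lt in H. lia. }
  set (n := (l + k)%nat).
  set (p := fun i : nat => x + (INR i - INR l) * r).
  assert (Hp : forall i, (i <= n)%nat -> ~ N (p i)).
  { intros i Hi. specialize (Hj (M + i - l)%nat ltac:(unfold n in Hi; lia)).
    rewrite minus_INR, plus_INR in Hj by lia. unfold p.
    replace (x + (INR i - INR l) * r) with (x + (INR M + INR i - INR l - INR M) * r) by ring.
    exact Hj. }
  set (w := fun i => u (p i) - sol r a b f al be (p i)).
  assert (Hw : forall i, (i <= n)%nat -> w i = 0).
  { apply discrete_unique.
    - unfold w, p. simpl INR. assert (x + (0 - INR l) * r <= a) by lra.
      unfold sol at 1. destruct (Rle_dec (x + (0 - INR l) * r) a); [|lra].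
      rewrite H2; [ring|lra|]. intro; apply (Hp 0%nat ltac:(lia)); unfold N; auto.
    - unfold w. assert (Ep : p n = x + INR k * r) by (unfold p, n; rewrite plus_INR; ring).
      rewrite Ep. unfold sol at 1. destruct (Rle_dec (x + INR k * r) a); [lra|].
      destruct (Rle_dec b (x + INR k * r)); [|lra].
      rewrite H3; [ring|lra|]. intro; apply (Hp n ltac:(lia)); unfold N. rewrite Ep; auto.
    - intros i Hi.
      assert (Ii : 1 <= INR i) by (apply (le_INR 1); lia).
      assert (In : INR i + 1 <= INR l + INR k) by (rewrite <- S_INR, <- plus_INR; apply le_INR; unfold n in Hi; lia).
      assert (P1 : 0 <= (INR i - 1) * r) by (apply Rmult_le_pos; lra).
      assert (P2 : 0 <= (INR l + INR k - INR i - 1) * r) by (apply Rmult_le_pos; lra).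
      assert (Hpi : a < p i < b) by (unfold p; split; nra).
      assert (Du := H1 (p i) Hpi ltac:(intro; apply (Hp i ltac:(lia)); unfold N; auto)).
      assert (Ds := exist_pt (p i) Hpi).
      unfold Dr in Du, Ds.
      replace (p i + r) with (p (S i)) in Du, Ds by (unfold p; rewrite S_INR; ring).
      replace (p i - r) with (p (i - 1)%nat) in Du, Ds by (unfold p; rewrite minus_INR by lia; simpl; ring).
      unfold w. rewrite <- Ds in Du.
      assert (r ^ 2 <> 0) by (apply pow_nonzero; lra).
      unfold Rdiv in Du. apply Rmult_eq_reg_r in Du; [lra|apply Rinv_neq_0_compat; auto]. }
  specialize (Hw l ltac:(unfold n; lia)). unfold w, p in Hw.
  replace (x + (INR l - INR l) * r) with x in Hw by ring. lra.
Qed.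

End S.

Theorem theorem1p9 (r a b : R) (f al be : R -> R) :
  0 < r -> a < b ->
  Linf_loc f -> Linf_loc al -> Linf_loc be ->
  (* existence: the explicit function is a solution *)
  (ae_on (fun x => a < x < b) (fun x => Dr r (sol r a b f al be) x = f x) /\
   (forall x, a - r <= x <= a -> sol r a b f al be x = al x) /\
   (forall x, b <= x <= b + r -> sol r a b f al be x = be x)) /\
  (* uniqueness up to null sets on [a-r, b+r] *)
  (forall u : R -> R,
     ae_on (fun x => a < x < b) (fun x => Dr r u x = f x) ->
     ae_on (fun x => a - r <= x <= a) (fun x => u x = al x) ->
     ae_on (fun x => b <= x <= b + r) (fun x => u x = be x) ->
     ae_on (fun x => a - r <= x <= b + r) (fun x => u x = sol r a b f al be x)).
Proof.
  intros Hr Hab _ _ _. split; [split; [|split]|].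
  - exists (fun _ => False). split; [apply null_empty|]. intros x Hx _. apply exist_pt; auto.
  - intros x Hx. unfold sol. destruct (Rle_dec x a); [reflexivity|lra].
  - intros x Hx. unfold sol. destruct (Rle_dec x a); [lra|]. destruct (Rle_dec b x); [reflexivity|lra].
  - intros u. apply uniq_part; auto.
Qed.
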